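(* Let $\varphi$ be an automorphism of $E$ of type 4, let $\{e_n\}_{n\in\mathbb{N}}$ be a basis of $L$, and write $\varphi(e_n)=-e_n+2a_n$ with $a_n=(e_n+\varphi(e_n))/2$. Then the family $\{a_n\mid n\in\mathbb{N}\}$ is linearly independent over $F$.
   Context: $F$ is a field of characteristic zero, $L$ an infinite-dimensional $F$-vector space, $E$ the Grassmann algebra of $L$. An automorphism $\varphi$ of $E$ with $\varphi^2=\mathrm{id}$ is of type 4 if for every basis $\gamma$ of $L$ no element $v\in\gamma$ satisfies $\varphi(v)=\pm v$. *)

(* Defs.v *)
From HB Require Import structures.
From mathcomp Require Import all_boot all_order all_algebra.
Set Implicit Arguments. Unset Strict Implicit. Unset Printing Implicit Defensive.
Import GRing.Theory.
Local Open Scope ring_scope.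

(* Model of the Grassmann algebra E of a vector space L with basis (g n)_{n in nat}:
   E is a unital associative F-algebra, the g n anticommute and square to 0, and the
   ordered monomials g_{i1} ... g_{ik} (i1 < ... < ik, k >= 0) form an F-basis of E.
   This characterizes E = E(L) up to isomorphism, with L = span {g n}. *)

Section Grassmann.
Variables (F : fieldType) (E : algType F).

Definition monomial (g : nat -> E) (s : seq nat) : E := \prod_(i <- s) g i.

Definition is_grassmann (g : nat -> E) : Prop :=
  [/\ (forall i j, g i * g j = - (g j * g i)),
      (forall i, g i * g i = 0),
      (forall (S : seq (seq nat)) (c : seq nat -> F),
          uniq S -> all (sorted ltn) S ->
          \sum_(s <- S) c s *: monomial g s = 0 -> forall s, s \in S -> c s = 0)
    & (forall x : E, exists (S : seq (seq nat)) (c : seq nat -> F),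
          all (sorted ltn) S /\ x = \sum_(s <- S) c s *: monomial g s)].

Definition inL (g : nat -> E) (v : E) : Prop :=
  exists (s : seq nat) (c : nat -> F), v = \sum_(i <- s) c i *: g i.

Definition family_free (f : nat -> E) : Prop :=
  forall (s : seq nat) (c : nat -> F), uniq s ->
    \sum_(i <- s) c i *: f i = 0 -> forall i, i \in s -> c i = 0.

Definition is_basis_family_of_L (g : nat -> E) (e : nat -> E) : Prop :=
  [/\ forall n, inL g (e n),
      family_free e
    & forall v, inL g v -> exists (s : seq nat) (c : nat -> F), v = \sum_(i <- s) c i *: e i].

Definition is_basis_set_of_L (g : nat -> E) (gamma : E -> Prop) : Prop :=
  [/\ forall v, gamma v -> inL g v,
      (forall (s : seq E) (c : E -> F), uniq s -> (forall v, v \in s -> gamma v) ->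
          \sum_(v <- s) c v *: v = 0 -> forall v, v \in s -> c v = 0)
    & forall v, inL g v -> exists (s : seq E) (c : E -> F),
          (forall w, w \in s -> gamma w) /\ v = \sum_(w <- s) c w *: w].

Definition is_alg_automorphism (phi : E -> E) : Prop :=
  [/\ (forall (a : F) (x y : E), phi (a *: x + y) = a *: phi x + phi y),
      (forall x y, phi (x * y) = phi x * phi y),
      phi 1 = 1
    & bijective phi].

Definition type4 (g : nat -> E) (phi : E -> E) : Prop :=
  forall gamma : E -> Prop, is_basis_set_of_L g gamma ->
    forall v, gamma v -> phi v <> v /\ phi v <> - v.

End Grassmann.

(* Main.v *)
Require Import Defs.
From HB Require Import structures.
From mathcomp Require Import all_boot all_order all_algebra.
Import GRing.Theory.
Local Open Scope ring_scope.

Set Implicit Arguments.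
Section Aux.
Variables (F : fieldType) (E : algType F).
Implicit Types (h : nat -> E).

Definition spanU h (w : E) := exists (t : seq nat) (d : nat -> F),
  uniq t /\ w = \sum_(i <- t) d i *: h i.

Lemma scale_if h (t : seq nat) (d : nat -> F) i :
  (if i \in t then d i else 0) *: h i = if i \in t then d i *: h i else 0.
Proof. by case: ifP => //; rewrite scale0r. Qed.

Lemma sum_restrict (s1 u : seq nat) (G : nat -> E) : uniq s1 -> uniq u ->
  {subset s1 <= u} ->
  \sum_(i <- u) (if i \in s1 then G i else 0) = \sum_(i <- s1) G i.
Proof.
move=> u1 uu sub; rewrite -big_mkcond /= -big_filter; apply: perm_big.
apply: uniq_perm; [exact: filter_uniq | exact: u1 | ].
move=> x; rewrite mem_filter; case: (boolP (x \in s1)) => /= H; [by rewrite (sub _ H) | by []].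
Qed.

Lemma spanU0 h : spanU h 0.
Proof. by exists [::], (fun _ => 0); rewrite big_nil. Qed.

Lemma spanUD h x y : spanU h x -> spanU h y -> spanU h (x + y).
Proof.
move=> [t1 [d1 [u1 ->]]] [t2 [d2 [u2 ->]]].
exists (undup (t1 ++ t2)), (fun i => (if i \in t1 then d1 i else 0)
   + (if i \in t2 then d2 i else 0)); split; first exact: undup_uniq.
symmetry; under eq_bigr do rewrite scalerDl !scale_if.
rewrite big_split /= !sum_restrict // ?undup_uniq // => z zt;
  by rewrite mem_undup mem_cat zt ?orbT.
Qed.

Lemma spanUZ h a x : spanU h x -> spanU h (a *: x).
Proof.
move=> [t [d [u ->]]]; exists t, (fun i => a * d i); split => //.
by rewrite scaler_sumr; apply: eq_bigr => i _; rewrite scalerA.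
Qed.

Lemma spanU_gen h n : spanU h (h n).
Proof. by exists [:: n], (fun _ => 1); rewrite big_seq1 scale1r. Qed.

Lemma spanU_sum h (I : Type) (s : seq I) (G : I -> E) :
  (forall i, spanU h (G i)) -> spanU h (\sum_(i <- s) G i).
Proof.
move=> HG; elim: s => [|x s IH]; rewrite ?big_nil ?big_cons;
  [exact: spanU0 | exact: spanUD].
Qed.

Lemma spanU_lin h (s : seq nat) (d : nat -> F) (G : nat -> E) :
  (forall i, spanU h (G i)) -> spanU h (\sum_(i <- s) d i *: G i).
Proof. by move=> HG; apply: spanU_sum => i; apply: spanUZ. Qed.

Lemma inL_spanU g w : inL g w <-> spanU g w.
Proof.
split; first by move=> [t [d ->]]; apply: spanU_lin => i; apply: spanU_gen.
by move=> [t [d [_ ->]]]; exists t, d.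
Qed.

Lemma free_coef (e : nat -> E) : family_free e -> forall s1 s2 (c1 c2 : nat -> F),
  uniq s1 -> uniq s2 ->
  \sum_(i <- s1) c1 i *: e i = \sum_(i <- s2) c2 i *: e i ->
  forall i, (if i \in s1 then c1 i else 0) = (if i \in s2 then c2 i else 0).
Proof.
move=> fe s1 s2 c1 c2 u1 u2 Heq i.
pose u := undup (s1 ++ s2).
have key := fe u (fun i => (if i \in s1 then c1 i else 0)
   - (if i \in s2 then c2 i else 0)) (undup_uniq _).
case: (boolP (i \in u)) => iu.
- apply/eqP; rewrite -subr_eq0; apply/eqP; apply: key => //.
  under eq_bigr do rewrite scalerBl !scale_if.
  rewrite sumrB !sum_restrict ?Heq ?subrr // ?undup_uniq // => z zt;
  by rewrite mem_undup mem_cat zt ?orbT.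
- move: iu; rewrite mem_undup mem_cat negb_or => /andP[/negbTE-> /negbTE->].
  done.
Qed.

Lemma basis_set_of (g f : nat -> E) : injective f ->
  (forall n, inL g (f n)) -> family_free f ->
  (forall w, inL g w -> spanU f w) ->
  is_basis_set_of_L g (fun w => exists n, w = f n).
Proof.
move=> finj fL ff fspan; split.
- by move=> v [n ->]; exact: fL.
- move=> s c us sg Hs.
  have [t Est] : exists t, s = map f t.
    elim: s sg {us Hs} => [|x s IH] sg; first by exists [::].
    have [n ->] := sg x (mem_head _ _).
    have [t ->] := IH (fun w ws => sg w (@mem_behead _ (x :: s) w ws)).
    by exists (n :: t).
  subst s => v /mapP [j jt ->].
  rewrite map_inj_uniq // in us; rewrite big_map in Hs.
  exact: (ff t (fun i => c (f i)) us Hs j jt).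
- move=> w /fspan [t [d [ut ->]]].
  exists (map f t), (fun y => \sum_(i <- t | f i == y) d i); split.
  + by move=> y /mapP [j _ ->]; exists j.
  + rewrite big_map; apply: eq_big_seq => j jt; congr (_ *: _).
    rewrite (eq_bigl (fun i => i == j)); last by move=> i; rewrite (inj_eq finj).
    by rewrite -big_filter filter_pred1_uniq // big_seq1.
Qed.

End Aux.
Arguments spanU {F E}.
Unset Implicit Arguments.

Theorem mainTheorem12 (F : fieldType) (hF : [pchar F] =i pred0)
  (E : algType F) (g : nat -> E) (hE : is_grassmann g)
  (phi : E -> E) (hphi : is_alg_automorphism phi)
  (hinv : forall x, phi (phi x) = x) (h4 : type4 g phi)
  (e : nat -> E) (he : is_basis_family_of_L g e) :
  family_free (fun n => (2%:R : F)^-1 *: (e n + phi (e n))).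
Proof.
move=> t d ut Hs i0 it0.
case: (eqVneq (d i0) 0) => // dn0; exfalso.
have [eL efree espan] := he.
have [phiL phiM phi1 _] := hphi.
have phi0 : phi 0 = 0.
  have := phiL 1 0 0; rewrite !scale1r addr0 => H.
  have : phi 0 + phi 0 - phi 0 = phi 0 - phi 0 by rewrite -H.
  by rewrite addrK subrr.
have phiD x y : phi (x + y) = phi x + phi y by have := phiL 1 x y; rewrite !scale1r.
have phiZ a x : phi (a *: x) = a *: phi x.
  by have := phiL a x 0; rewrite addr0 phi0 addr0.
have phisum : forall s (c : nat -> F) (G : nat -> E),
    phi (\sum_(i <- s) c i *: G i) = \sum_(i <- s) c i *: phi (G i).
  elim => [|x s IH] c G; rewrite ?big_nil ?big_cons ?phi0 //.
  by rewrite phiD phiZ IH.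
have h2 : (2%:R : F) != 0.
  have := hF 2; rewrite !inE /= => H; apply/negP => H2.
  by move/negbT: H; rewrite H2.
pose v := \sum_(i <- t) d i *: e i.
have vphi : phi v = - v.
  have : (2%:R : F)^-1 *: (v + phi v) = 0.
    rewrite -Hs /v phisum -big_split scaler_sumr /=; apply: eq_bigr => i _.
    by rewrite -scalerDr !scalerA mulrC.
  move/eqP; rewrite scaler_eq0 invr_eq0 (negbTE h2) /= addrC addr_eq0.
  by move/eqP.
pose f := fun n => if n == i0 then v else e n.
have e_inj : forall m n, e m = e n -> m = n.
  move=> m n Hmn; apply/eqP; apply/negP => /negP hmn.
  have := @free_coef _ _ e efree [:: m] [:: n] (fun _ => 1) (fun _ => 1)
    (erefl _) (erefl _) (ltac:(by rewrite !big_seq1 Hmn)) m.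
  by rewrite !inE eqxx (negbTE hmn) => /eqP; rewrite oner_eq0.
have v_ne : forall n, n != i0 -> v <> e n.
  move=> n hn Hv.
  have := @free_coef _ _ e efree t [:: n] d (fun _ => 1)
    ut (erefl _) (ltac:(by rewrite big_seq1 scale1r)) i0.
  by rewrite it0 inE eq_sym (negbTE hn) => /eqP; rewrite (negbTE dn0).
have finj : injective f.
  move=> m n; rewrite /f; case: eqVneq => [->|hm]; case: eqVneq => [->|hn] //.
  - by move=> /v_ne; move/(_ hn).
  - by move=> H; have := v_ne _ hm; move/(_ (esym H)).
  - exact: e_inj.
have eS : forall i, spanU g (e i) by move=> i; apply/inL_spanU.
have fL : forall n, inL g (f n).
  move=> n; rewrite /f; case: eqVneq => _; last exact: eL.
  by apply/inL_spanU; apply: spanU_lin.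
have ffree : family_free f.
  move=> s c us Hs0 j js.
  case: (boolP (i0 \in s)) => i0s.
  - rewrite (bigD1_seq i0) //= {1}/f eqxx -big_filter in Hs0.
    pose s' := [seq i <- s | i != i0].
    have us' : uniq s' by exact: filter_uniq.
    have i0s' : i0 \notin s' by rewrite mem_filter eqxx.
    have Hs1 : \sum_(i <- s') c i *: f i = \sum_(i <- s') c i *: e i.
      apply: eq_big_seq => i; rewrite mem_filter => /andP[hi _].
      by rewrite /f (negbTE hi).
    rewrite Hs1 in Hs0.
    have Hs2 : \sum_(i <- t) (c i0 * d i) *: e i
               = \sum_(i <- s') (- c i) *: e i.
      under eq_bigr do rewrite -scalerA.
      rewrite -scaler_sumr.
      under [RHS]eq_bigr do rewrite scaleNr.
      rewrite sumrN; apply/eqP; rewrite -addr_eq0; exact/eqP.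
    have := @free_coef _ _ e efree t s' (fun i => c i0 * d i) (fun i => - c i) ut us' Hs2 i0.
    rewrite it0 (negbTE i0s') => /eqP; rewrite mulf_eq0 (negbTE dn0) orbF.
    move=> /eqP ci0.
    case: (eqVneq j i0) => [-> //|hj].
    rewrite ci0 scale0r add0r in Hs0.
    apply: (efree s' c us' Hs0).
    by rewrite mem_filter hj.
  - apply: (efree s c us _ j js).
    rewrite -[RHS]Hs0; apply: eq_big_seq => i iS.
    have hi : i != i0 by apply/eqP => hh; move: i0s; rewrite -hh iS.
    by rewrite /f (negbTE hi).
have fspan : forall w, inL g w -> spanU f w.
  move=> w /espan [s2 [d2 ->]]; apply: spanU_lin => i.
  case: (eqVneq i i0) => [->|hi]; last first.
    have -> : e i = f i by rewrite /f (negbTE hi).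
    exact: spanU_gen.
  have Hv : v = d i0 *: e i0 + \sum_(j <- t | j != i0) d j *: f j.
    rewrite /v (bigD1_seq i0) //=; congr (_ + _).
    by apply: eq_bigr => j /negbTE hj; rewrite /f hj.
  have -> : e i0 = (d i0)^-1 *: (f i0 - \sum_(j <- t | j != i0) d j *: f j).
    by rewrite {1}/f eqxx {1}Hv addrK scalerA mulVf // scale1r.
  apply: spanUZ; apply: spanUD; first exact: spanU_gen.
  rewrite -scaleN1r; apply: spanUZ.
  rewrite -big_filter; apply: spanU_lin => j; exact: spanU_gen.
have gb := basis_set_of finj fL ffree fspan.
have gv : (fun w => exists n, w = f n) v by exists i0; rewrite /f eqxx.
have [_ H] := h4 _ gb v gv.
exact: H vphi.
Qed.
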